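(* Let $K$, $L$, $A$ be as in the context, and suppose there is an $A$-scaffold on $L$ of tolerance $\mathfrak{T}\ge1$ with shift parameters $b_1,\dots,b_n$ (and elements $\lambda_t$, $\Psi_i$). Then $\{\Psi^{(s)}:s\in\mathbb{S}_{p^n}\}$ is a $K$-basis of $A$. Moreover, let $b'$ be any integer with $\mathfrak{a}(b')=p^n-1$ and let $\rho\in L$ with $v_L(\rho)=b'$. Then $L$ is a free $A$-module on the generator $\rho$. Additionally, for each $h\in\mathbb{Z}$, the ring $\mathfrak{A}(h,A)=\{\alpha\in A:\alpha\cdot\mathfrak{P}_L^h\subseteq\mathfrak{P}_L^h\}$ is an $\mathfrak{O}_K$-order in $A$.
   Context: Let $K$ be a field complete with respect to a discrete valuation, with residue field $\kappa$ of characteristic $p>0$ ($\kappa$ need not be perfect; $K$ may have characteristic $0$ or $p$). Let $L/K$ be a totally ramified field extension of degree $p^n$; let $v_K,v_L$ be the normalized valuations ($v_K(K^\times)=v_L(L^\times)=\mathbb{Z}$), $\mathfrak{O}_K,\mathfrak{O}_L$ the valuation rings, $\mathfrak{P}_K,\mathfrak{P}_L$ their maximal ideals. Let $A$ be a $K$-algebra with $\dim_K A=p^n$ acting $K$-linearly on $L$ (making $L$ a left $A$-module), written $\alpha\cdot x$. Let $\mathbb{S}_{p^n}=\{0,\dots,p^n-1\}$; write $s\in\mathbb{S}_{p^n}$ in base $p$ as $s=\sum_{i=1}^n s_{(n-i)}p^{n-i}$ with $s_{(n-i)}\in\{0,\dots,p-1\}$. Given integers $b_1,\dots,b_n$ prime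 to $p$ (shift parameters), put $\mathfrak{b}(s)=\sum_{i=1}^n s_{(n-i)}p^{n-i}b_i$; the map $s\mapsto\mathfrak{b}(s)\bmod p^n$ is a bijection of $\mathbb{S}_{p^n}$, and for $t\in\mathbb{Z}$ let $\mathfrak{a}(t)\in\mathbb{S}_{p^n}$ be the unique element with $\mathfrak{b}(\mathfrak{a}(t))\equiv -t\pmod{p^n}$, with base-$p$ digits $\mathfrak{a}(t)_{(n-i)}$. An $A$-scaffold on $L$ of tolerance $\mathfrak{T}\ge1$ (possibly $\mathfrak{T}=\infty$) with shift parameters $b_1,\dots,b_n$ consists of: (i) elements $\lambda_t\in L$ for $t\in\mathbb{Z}$ with $v_L(\lambda_t)=t$ and $\lambda_{t_1}\lambda_{t_2}^{-1}\in K$ whenever $t_1\equiv t_2\pmod{p^n}$; (ii) elements $\Psi_1,\dots,\Psi_n\in A$ with $\Psi_i\cdot1=0$, such that for each $i$ and each $t\in\mathbb{Z}$ there is a unit $u_{i,t}\in\mathfrak{O}_K^\times$ with $\Psi_i\cdot\lambda_t\equiv u_{i,t}\lambda_{t+p^{n-i}b_i}$ if $\mathfrak{a}(t)_{(n-i)}\ge1$ and $\Psi_i\cdot\lambda_t\equiv0$ if $\mathfrak{a}(t)_{(n-i)}=0$, congruences modulo $\lambda_{t+p^{n-i}b_i}\mathfrak{P}_L^{\mathfrak{T}}$ (equalities if $\mathfrak{T}=\infty$). For $s\in\mathbb{S}_{p^n}$, $\Psi^{(s)}=\Psi_n^{s_{(0)}}\Psi_{n-1}^{s_{(1)}}\cdots\Psi_1^{s_{(n-1)}}$.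 *)

(* Defs.v *)
From HB Require Import structures.
From mathcomp Require Import all_boot all_order all_algebra all_field.
Set Implicit Arguments. Unset Strict Implicit. Unset Printing Implicit Defensive.
Import Order.TTheory GRing.Theory Num.Theory.
Local Open Scope ring_scope.

Definition is_normalized_dval (F : fieldType) (v : F -> int) : Prop :=
  [/\ (forall x y : F, x != 0 -> y != 0 -> v (x * y) = v x + v y),
      (forall x y : F, x != 0 -> y != 0 -> x + y != 0 -> Num.min (v x) (v y) <= v (x + y)) &
      (forall z : int, exists2 x : F, x != 0 & v x = z)].

Definition vring (F : fieldType) (v : F -> int) (x : F) : Prop := x = 0 \/ 0 <= v x.
Definition vunit (F : fieldType) (v : F -> int) (x : F) : Prop := x != 0 /\ v x = 0.
Definition videal (F : fieldType) (v : F -> int) (h : int) (x : F) : Prop :=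
  x = 0 \/ h <= v x.

Definition v_cauchy (F : fieldType) (v : F -> int) (u : nat -> F) : Prop :=
  forall N : int, exists M : nat, forall i j : nat, (M <= i)%N -> (M <= j)%N ->
    videal v N (u i - u j).
Definition v_converges (F : fieldType) (v : F -> int) (u : nat -> F) (l : F) : Prop :=
  forall N : int, exists M : nat, forall i : nat, (M <= i)%N -> videal v N (u i - l).
Definition v_complete (F : fieldType) (v : F -> int) : Prop :=
  forall u : nat -> F, v_cauchy v u -> exists l : F, v_converges v u l.

Definition is_Kaction (K : fieldType) (L : fieldExtType K) (A : falgType K)
    (act : A -> L -> L) : Prop :=
  [/\ (forall x : L, act 1 x = x),
      (forall (a b : A) (x : L), act (a * b) x = act a (act b x)),
      (forall (a b : A) (x : L), act (a + b) x = act a x + act b x),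
      (forall (a : A) (x y : L), act a (x + y) = act a x + act a y) &
      (forall (c : K) (a : A) (x : L), act (c *: a) x = c *: act a x) /\
      (forall (c : K) (a : A) (x : L), act a (c *: x) = c *: act a x)].

Definition digit (p s j : nat) : nat := (s %/ p ^ j) %% p.

Definition bmap (p n : nat) (b : nat -> int) (s : nat) : int :=
  \sum_(1 <= i < n.+1) ((digit p s (n - i))%:Z * (p ^ (n - i))%:Z * b i).

(* a(t) : the (unique) s in S_{p^n} = {0,...,p^n-1} with b(s) = -t mod p^n *)
Definition amap (p n : nat) (b : nat -> int) (t : int) : nat :=
  nth 0%N (iota 0 (p ^ n))
    (find (fun s => ((bmap p n b s + t) %% (p ^ n)%:Z)%Z == 0) (iota 0 (p ^ n))).

(* congruence x = y mod lambda_m P_L^T, i.e. v_L(x - y) >= m + T; T = None means T = oo *)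
Definition tcong (K : fieldType) (L : fieldExtType K) (vL : L -> int)
    (T : option nat) (m : int) (x y : L) : Prop :=
  match T with
  | None => x = y
  | Some T => videal vL (m + T%:Z) (x - y)
  end.

Definition is_scaffold (K : fieldType) (L : fieldExtType K) (A : falgType K)
    (vK : K -> int) (vL : L -> int) (act : A -> L -> L) (p n : nat)
    (T : option nat) (b : nat -> int) (lam : int -> L) (Psi : nat -> A) : Prop :=
  [/\
      (match T with None => True | Some T => (1 <= T)%N end),
      (forall i, (1 <= i <= n)%N -> ~~ (p%:Z %| b i)%Z),
      (forall t : int, lam t != 0 /\ vL (lam t) = t),
      (forall t1 t2 : int, (t1 == t2 %[mod (p ^ n)%:Z])%Z ->
          exists c : K, lam t1 / lam t2 = c%:A) &
      (forall i, (1 <= i <= n)%N -> act (Psi i) 1 = 0) /\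
      (forall i, (1 <= i <= n)%N -> forall t : int,
          exists u : K, vunit vK u /\
            let m := t + (p ^ (n - i))%:Z * b i in
            if (1 <= digit p (amap p n b t) (n - i))%N
            then tcong vL T m (act (Psi i) (lam t)) (u *: lam m)
            else tcong vL T m (act (Psi i) (lam t)) 0)].

Definition Psi_pow (K : fieldType) (A : falgType K) (p n : nat) (Psi : nat -> A) (s : nat) : A :=
  \prod_(0 <= j < n) Psi (n - j)%N ^+ digit p s j.

Definition assoc_order (K : fieldType) (L : fieldExtType K) (A : falgType K)
    (vL : L -> int) (act : A -> L -> L) (h : int) (alpha : A) : Prop :=
  forall x : L, videal vL h x -> videal vL h (act alpha x).

Definition is_OK_order (K : fieldType) (A : falgType K) (vK : K -> int)
    (S : A -> Prop) : Prop :=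
  [/\ S 1, S 0,
      (forall x y, S x -> S y -> S (x + y)),
      (forall x y, S x -> S y -> S (x * y)) &
      (forall (c : K) x, vring vK c -> S x -> S (c *: x)) /\
      exists gens : seq A,
        (<<gens>>%VS = fullv) /\
        (forall x, S x <-> exists c : nat -> K,
             (forall i, vring vK (c i)) /\
             x = \sum_(i < size gens) c i *: gens`_i)].

(* Main.v *)
Require Import Defs.
From HB Require Import structures.
From Stdlib Require Import Classical.
From mathcomp Require Import all_boot all_order all_algebra all_field zify ring.
Set Implicit Arguments. Unset Strict Implicit. Unset Printing Implicit Defensive.
Import Order.TTheory GRing.Theory Num.Theory.
Local Open Scope ring_scope.

Section Val.
Variables (F : fieldType) (v : F -> int).
Hypothesis Hv : is_normalized_dval v.

Lemma vM x y : x != 0 -> y != 0 -> v (x * y) = v x + v y.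
Proof. by move: Hv => [h1 h2 h3]; auto. Qed.

Lemma vD x y : x != 0 -> y != 0 -> x + y != 0 -> Num.min (v x) (v y) <= v (x + y).
Proof. by move: Hv => [h1 h2 h3]; auto. Qed.

Lemma v1 : v 1 = 0.
Proof. have := vM (oner_neq0 F) (oner_neq0 F). rewrite mulr1 => h. change (v 1 = v 1 + v 1) in h. lia. Qed.

Lemma vN1 : v (-1) = 0.
Proof.
have h1 : (-1 : F) != 0 by rewrite oppr_eq0 oner_neq0.
have := vM h1 h1. rewrite mulrNN mulr1 v1 => h. lia.
Qed.

Lemma vN x : x != 0 -> v (- x) = v x.
Proof.
move=> hx. have h1 : (-1 : F) != 0 by rewrite oppr_eq0 oner_neq0.
by rewrite -mulN1r vM // vN1 add0r.
Qed.

Lemma vV x : x != 0 -> v (x^-1) = - v x.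
Proof.
move=> hx. have hi : x^-1 != 0 by rewrite invr_eq0.
have := vM hx hi. rewrite mulfV // v1 => h. lia.
Qed.

Lemma videal_le h h' x : h' <= h -> videal v h x -> videal v h' x.
Proof. move=> hh [->|hx]; [by left|right]. lia. Qed.

Lemma videal0 h : videal v h 0.
Proof. by left. Qed.

Lemma videalD h x y : videal v h x -> videal v h y -> videal v h (x + y).
Proof.
case=> [->|hx]; first by rewrite add0r.
case=> [->|hy]; first by rewrite addr0; right.
have [->|xy] := eqVneq (x + y) 0; first by left.
right. have [x0|x0] := eqVneq x 0; first by rewrite x0 add0r.
have [y0|y0] := eqVneq y 0; first by rewrite y0 addr0.
have := vD x0 y0 xy. set a := v (x + y). lia.
Qed.

Lemma videalN h x : videal v h x -> videal v h (- x).
Proof.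
case=> [->|hx]; first by rewrite oppr0; left.
have [->|x0] := eqVneq x 0; first by rewrite oppr0; left.
by right; rewrite vN.
Qed.

Lemma videalB h x y : videal v h x -> videal v h y -> videal v h (x - y).
Proof. by move=> hx hy; apply: videalD => //; apply: videalN. Qed.

Lemma strict x y : x != 0 -> videal v (v x + 1) y -> x + y != 0 /\ v (x + y) = v x.
Proof.
move=> x0 [->|hy]; first by rewrite addr0.
have [y0|y0] := eqVneq y 0; first by rewrite y0 addr0.
have xy : x + y != 0.
  apply/negP=> e. have ey : y = - x by move: e; rewrite addrC addr_eq0 => /eqP.
  move: hy; rewrite ey vN //. set a := v x. lia.
split=> //.
have h1 := vD x0 y0 xy.
have ny0 : - y != 0 by rewrite oppr_eq0.
have e : x = (x + y) + - y by rewrite addrK.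
have x0' : (x + y) + - y != 0 by rewrite -e.
have h2 := vD xy ny0 x0'; rewrite -e vN // in h2.
move: h1 h2 hy. set a := v (x + y). set c := v x. set d := v y. lia.
Qed.

Lemma strict_lt x y : x != 0 -> y != 0 -> v x < v y -> x + y != 0 /\ v (x + y) = v x.
Proof. move=> x0 y0 lt; apply: strict => //; right. move: lt. set a := v x. set b := v y. lia. Qed.

Lemma sum_dist m (G : nat -> F) :
  (forall i j, (i < m)%N -> (j < m)%N -> i != j -> G i != 0 -> G j != 0 -> v (G i) != v (G j)) ->
  [/\ (\sum_(i < m) G i = 0 -> forall i, (i < m)%N -> G i = 0),
      (\sum_(i < m) G i != 0 -> exists2 i, (i < m)%N & G i != 0 /\ v (G i) = v (\sum_(i < m) G i)) &
      (\sum_(i < m) G i != 0 -> forall j, (j < m)%N -> G j != 0 -> v (\sum_(i < m) G i) <= v (G j))].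
Proof.
elim: m => [|m IH] hd.
  split; [by move=> _ i| by rewrite big_ord0 eqxx | by rewrite big_ord0 eqxx].
have hd' : forall i j, (i < m)%N -> (j < m)%N -> i != j -> G i != 0 -> G j != 0 -> v (G i) != v (G j).
  by move=> i j hi hj; apply: hd; apply: ltnW.
have [Ia Ib Ic] := IH hd'.
rewrite big_ord_recr /=. set S := \sum_(i < m) G i.
have [Gm0|Gm0] := eqVneq (G m) 0.
  rewrite Gm0 addr0; split.
  - move=> S0 i; rewrite ltnS leq_eqVlt => /orP [/eqP ->|]; [by [] | exact: Ia].
  - by move=> S0; have [i hi hh] := Ib S0; exists i => //; apply: ltnW.
  - move=> S0 j; rewrite ltnS leq_eqVlt => /orP [/eqP ->|]; first by rewrite Gm0 eqxx.
    exact: Ic.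
have [S0|S0] := eqVneq S 0.
  have Gi0 := Ia S0. rewrite S0 add0r; split.
  - by move=> e; move: Gm0; rewrite e eqxx.
  - by move=> _; exists m.
  - move=> _ j; rewrite ltnS leq_eqVlt => /orP [/eqP ->|hj]; first by [].
    by rewrite Gi0 ?eqxx.
have [i0 hi0 [Gi0 vi0]] := Ib S0.
have ne : v S != v (G m).
  rewrite -vi0; apply: hd => //; [exact: ltnW | by rewrite ltn_eqF].
have [lt|gt] := ltP (v S) (v (G m)).
  have [nz ev] := strict_lt S0 Gm0 lt. split.
  - by move=> e; move: nz; rewrite e eqxx.
  - by move=> _; exists i0; [exact: ltnW | rewrite ev].
  - move=> _ j; rewrite ltnS leq_eqVlt => /orP [/eqP ->|hj] Gj; rewrite ev.
      by apply: ltW.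
    exact: Ic.
have lt : v (G m) < v S by rewrite lt_neqAle eq_sym ne gt.
have [nz ev] := strict_lt Gm0 S0 lt. rewrite addrC. split.
- by move=> e; move: nz; rewrite e eqxx.
- by move=> _; exists m => //; rewrite ev.
- move=> _ j; rewrite ltnS leq_eqVlt => /orP [/eqP ->|hj] Gj; rewrite ev //.
  have := Ic S0 j hj Gj. move: lt. set a := v S. set b := v (G m). set c := v (G j). lia.
Qed.

Lemma sum_dist_ord m (G : 'I_m -> F) :
  (forall i j : 'I_m, i != j -> G i != 0 -> G j != 0 -> v (G i) != v (G j)) ->
  [/\ (\sum_(i < m) G i = 0 -> forall i, G i = 0),
      (\sum_(i < m) G i != 0 -> exists i, G i != 0 /\ v (G i) = v (\sum_(i < m) G i)) &
      (\sum_(i < m) G i != 0 -> forall j, G j != 0 -> v (\sum_(i < m) G i) <= v (G j))].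
Proof.
move=> hd.
pose G' (j : nat) := if insub j is Some i then G i else 0.
have hG' : forall i : 'I_m, G' i = G i by move=> i; rewrite /G' valK.
have eS : \sum_(i < m) G' i = \sum_(i < m) G i by apply: eq_bigr => i _; rewrite hG'.
have [] := @sum_dist m G'.
  move=> i j hi hj ij. rewrite -[i]/(val (Ordinal hi)) -[j]/(val (Ordinal hj)) !hG'.
  by apply: hd; apply/negP => /eqP /(congr1 val) /= e; move: ij; rewrite e eqxx.
rewrite eS => Ia Ib Ic; split.
- by move=> S0 i; rewrite -hG'; apply: Ia.
- by move=> S0; have [i hi] := Ib S0; rewrite -[i]/(val (Ordinal hi)) hG' => h; exists (Ordinal hi).
- by move=> S0 j; rewrite -hG'; apply: Ic.
Qed.
End Val.

Section Digits.
Variable p : nat.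
Hypothesis p1 : (1 < p)%N.

Definition num (m : nat) (d : nat -> nat) : nat := (\sum_(j < m) d j * p ^ j)%N.

Lemma numS m d : num m.+1 d = (num m d + d m * p ^ m)%N.
Proof. by rewrite /num big_ord_recr. Qed.

Lemma num_lt m d : (forall j, d j < p)%N -> (num m d < p ^ m)%N.
Proof.
move=> hd; elim: m => [|m IH]; first by rewrite /num big_ord0 expn0.
rewrite numS expnS. have := hd m. move: IH. set x := num m d. set a := d m. set q := (p ^ m)%N.
nia.
Qed.

Lemma digit_num m d k : (forall j, d j < p)%N -> (k < m)%N -> digit p (num m d) k = d k.
Proof.
move=> hd; elim: m => [//|m IH]; rewrite ltnS leq_eqVlt => /orP [/eqP ->|hk].
  rewrite numS /digit addnC divnMDl ?expn_gt0 ?(ltnW p1) //.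
  by rewrite divn_small ?num_lt // addn0 modn_small.
rewrite numS /digit.
have -> : (d m * p ^ m = (d m * p ^ (m - k).-1 * p) * p ^ k)%N.
  have e : (p ^ m = p ^ (m - k).-1 * p * p ^ k)%N.
    by rewrite -expnSr prednK ?subn_gt0 // -expnD subnK // ltnW.
  by rewrite e !mulnA.
rewrite addnC divnMDl ?expn_gt0 ?(ltnW p1) // modnMDl.
exact: IH.
Qed.

Lemma mod_num s m : (s %% p ^ m)%N = num m (digit p s).
Proof.
elim: m => [|m IH]; first by rewrite expn0 modn1 /num big_ord0.
rewrite numS -IH /digit.
set Q := (s %/ p ^ m)%N. set r := (s %% p ^ m)%N.
have hs : s = ((Q %/ p) * p ^ m.+1 + ((Q %% p) * p ^ m + r))%N.
  rewrite {1}(divn_eq s (p ^ m)) -/Q -/r {1}(divn_eq Q p) expnS. ring.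
rewrite {1}hs modnMDl modn_small; first by rewrite addnC.
have h1 : (Q %% p < p)%N by rewrite ltn_mod ltnW.
have h2 : (r < p ^ m)%N by rewrite ltn_mod expn_gt0 ltnW.
rewrite expnS. move: h1 h2. set a := (Q %% p)%N. set q := (p ^ m)%N. nia.
Qed.

Lemma num_digit s m : (s < p ^ m)%N -> num m (digit p s) = s.
Proof. by move=> hs; rewrite -mod_num modn_small. Qed.

Lemma digit_lt s j : (digit p s j < p)%N.
Proof. by rewrite /digit ltn_mod ltnW. Qed.

Lemma num_pred m : num m (fun _ => p.-1) = (p ^ m).-1.
Proof.
elim: m => [|m IH]; first by rewrite /num big_ord0 expn0.
rewrite numS IH expnS. have : (0 < p ^ m)%N by rewrite expn_gt0 ltnW.
move: p1. set q := (p ^ m)%N. nia.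
Qed.

Lemma digit_pred m j : (j < m)%N -> digit p (p ^ m).-1 j = p.-1.
Proof. move=> hj. rewrite -num_pred digit_num //. move=> _. move: p1. lia. Qed.

Variables (n : nat) (b : nat -> int).

Definition bmap' (d : nat -> nat) : int := \sum_(j < n) (d j)%:Z * (p ^ j)%:Z * b (n - j)%N.

Lemma bmapE s : bmap p n b s = bmap' (digit p s).
Proof.
rewrite /bmap big_rev_mkord subn1 /= /bmap'. apply: eq_bigr => i _.
by rewrite subSS subKn // ltnW.
Qed.

End Digits.

Section Amap.
Variables (p n : nat) (b : nat -> int).
Hypothesis pp : prime p.
Hypothesis hb : forall i, (1 <= i <= n)%N -> ~~ (p%:Z %| b i)%Z.

Let p1 : (1 < p)%N := prime_gt1 pp.

Lemma inj_digits m (d d' : nat -> nat) : (m <= n)%N ->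
  (forall j, d j < p)%N -> (forall j, d' j < p)%N ->
  ((p ^ m)%:Z %| \sum_(j < m) ((d j)%:Z - (d' j)%:Z) * (p ^ j)%:Z * b (n - j)%N)%Z ->
  forall j, (j < m)%N -> d j = d' j.
Proof.
move=> + hd hd'; elim: m => [//|m IH] hm.
rewrite big_ord_recr /=.
set S := \sum_(j < m) _. set c := ((d m)%:Z - (d' m)%:Z).
have hY : ((p ^ m)%:Z %| c * (p ^ m)%:Z * b (n - m)%N)%Z.
  by rewrite -mulrA mulrC; apply: dvdz_mulr; apply: dvdz_mulr.
have hpm : ((p ^ m)%:Z %| (p ^ m.+1)%:Z)%Z by rewrite expnS PoszM dvdz_mull.
move=> H.
have HS : ((p ^ m)%:Z %| S)%Z.
  have := dvdz_trans hpm H. by rewrite (rpredDr _ hY).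
have IH' := IH (ltnW hm) HS.
have S0 : S = 0.
  rewrite /S big1 // => j _. by rewrite IH' // subrr !mul0r.
move: H; rewrite S0 add0r.
have e1 : c * (p ^ m)%:Z * b (n - m)%N = (c * b (n - m)%N) * (p ^ m)%:Z by ring.
have e2 : (p ^ m.+1)%:Z = p%:Z * (p ^ m)%:Z by rewrite expnS PoszM.
have pm0 : (0 < p ^ m)%N by rewrite expn_gt0 prime_gt0.
rewrite e1 e2 dvdz_mul2r; last by move: pm0; lia.
rewrite unfold_in /= abszM Euclid_dvdM // => /orP [hc|hbm].
  move=> j; rewrite ltnS leq_eqVlt => /orP [/eqP ->|hj]; last exact: IH'.
  have hc' : `|c|%N == 0%N.
    apply/negPn/negP=> nz. have hpos : (0 < `|c|)%N by rewrite lt0n.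
    have := dvdn_leq hpos hc.
    have := hd m; have := hd' m. rewrite /c. move: nz. lia.
  move: hc'; rewrite absz_eq0 /c subr_eq0 => /eqP [].
  done.
exfalso. have := hb (i := (n - m)%N). rewrite subn_gt0 hm leq_subr => /(_ isT).
by rewrite unfold_in /= hbm.
Qed.

Let N := (p ^ n)%N.

Lemma Npos : (0 < N)%N. Proof. by rewrite expn_gt0 prime_gt0. Qed.

Lemma digits_eq s s' : (s < N)%N -> (s' < N)%N ->
  (forall j, (j < n)%N -> digit p s j = digit p s' j) -> s = s'.
Proof.
move=> hs hs' he. rewrite -(num_digit p1 hs) -(num_digit p1 hs').
by apply: eq_bigr => j _; rewrite he.
Qed.

Lemma bmap_inj s s' : (s < N)%N -> (s' < N)%N ->
  (N%:Z %| bmap p n b s - bmap p n b s')%Z -> s = s'.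
Proof.
move=> hs hs' H. apply: digits_eq => //.
apply: (@inj_digits n (digit p s) (digit p s')) => //; try by move=> j; apply: digit_lt.
move: H; rewrite !bmapE /bmap' -sumrB.
by rewrite (eq_bigr (fun j : 'I_n => ((digit p s j)%:Z - (digit p s' j)%:Z) * (p ^ j)%:Z * b (n - j)%N)) // => j _; rewrite -mulrBl -mulrBl.
Qed.

Lemma amap_exists t : exists2 s, (s < N)%N & (N%:Z %| bmap p n b s + t)%Z.
Proof.
have Nz : N%:Z != 0 by have := Npos; lia.
have Np : 0 < N%:Z by have := Npos; lia.
have hlt : forall z : int, (`|(z %% N%:Z)%Z| < N)%N.
  move=> z. have := modz_ge0 z Nz. have := ltz_pmod z Np. lia.
pose f (s : 'I_N) : 'I_N := Ordinal (hlt (bmap p n b s)).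
have finj : injective f.
  move=> s s' /(congr1 val) /= e. apply: val_inj => /=.
  apply: bmap_inj => //. rewrite -eqz_mod_dvd. apply/eqP.
  have := modz_ge0 (bmap p n b s) Nz. have := modz_ge0 (bmap p n b s') Nz. move: e. lia.
have [g fg gf] := injF_bij finj.
exists (g (Ordinal (hlt (- t)))) => //.
have := congr1 val (gf (Ordinal (hlt (- t)))). rewrite /= => e.
rewrite -[X in _ + X]opprK -eqz_mod_dvd. apply/eqP.
have := modz_ge0 (bmap p n b (g (Ordinal (hlt (- t))))) Nz. have := modz_ge0 (- t) Nz. move: e. lia.
Qed.

Lemma amap_spec t : (amap p n b t < N)%N /\ (N%:Z %| bmap p n b (amap p n b t) + t)%Z.
Proof.
have [s hs hd] := amap_exists t.
set P := (fun s => ((bmap p n b s + t) %% (p ^ n)%:Z)%Z == 0).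
have hP : has P (iota 0 (p ^ n)).
  apply/hasP; exists s; first by rewrite mem_iota.
  by rewrite /P; apply/eqP/dvdz_mod0P.
have hf := hP; rewrite has_find size_iota in hf.
have e : amap p n b t = find P (iota 0 (p ^ n)) by rewrite /amap nth_iota.
split; first by rewrite e.
have := nth_find 0%N hP. rewrite -/P. rewrite /amap. move=> /eqP /dvdz_mod0P. done.
Qed.

Lemma amap_uniq t s : (s < N)%N -> (N%:Z %| bmap p n b s + t)%Z -> amap p n b t = s.
Proof.
move=> hs hd. have [ha hd'] := amap_spec t. apply: bmap_inj => //.
have -> : bmap p n b (amap p n b t) - bmap p n b s =
   (bmap p n b (amap p n b t) + t) - (bmap p n b s + t) by ring.
by apply: rpredB.
Qed.


Lemma amap_step t k : (k < n)%N -> (1 <= digit p (amap p n b t) k)%N ->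
  forall j, (j < n)%N ->
  digit p (amap p n b (t + (p ^ k)%:Z * b (n - k)%N)) j = (digit p (amap p n b t) j - (j == k))%N.
Proof.
move=> hk h1.
set d := digit p (amap p n b t).
pose d' j := (d j - (j == k))%N.
have hd' : forall j, (d' j < p)%N.
  move=> j; rewrite /d'. have := digit_lt p1 (amap p n b t) j. rewrite -/d. lia.
set s' := num p n d'.
have hs' : (s' < N)%N by apply: num_lt.
have hdig : forall j, (j < n)%N -> digit p s' j = d' j by move=> j hj; apply: digit_num.
suff -> : amap p n b (t + (p ^ k)%:Z * b (n - k)%N) = s' by [].
apply: amap_uniq => //.
have eb : bmap p n b s' = bmap' p n b d - (p ^ k)%:Z * b (n - k)%N.
  rewrite bmapE /bmap'.
  rewrite (eq_bigr (fun j : 'I_n => (d j)%:Z * (p ^ j)%:Z * b (n - j)%N -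
                   ((j : nat) == k)%:Z * (p ^ j)%:Z * b (n - j)%N)); last first.
    move=> j _. rewrite hdig // /d' -!mulrBl. congr (_ * _ * _).
    case: eqP => [ej|]; last by rewrite subn0 subr0.
    rewrite -ej in h1 *. rewrite -/d in h1. move: h1. lia.
  rewrite sumrB; congr (_ - _).
  rewrite (bigD1 (Ordinal hk)) //= eqxx mul1r big1 ?addr0 // => j /negP hj.
  case: eqP => [ej|]; last by rewrite !mul0r.
  by exfalso; apply: hj; apply/eqP; apply: val_inj.
rewrite eb.
have -> : bmap' p n b d - (p ^ k)%:Z * b (n - k)%N + (t + (p ^ k)%:Z * b (n - k)%N)
   = bmap p n b (amap p n b t) + t by rewrite bmapE; ring.
by case: (amap_spec t).
Qed.

Lemma amap_shift t z : amap p n b (t + N%:Z * z) = amap p n b t.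
Proof.
have [h1 h2] := amap_spec t. apply: amap_uniq => //.
rewrite addrA. apply: rpredD => //. exact: dvdz_mulr.
Qed.

Lemma amap_bmap s : (s < N)%N -> amap p n b (- bmap p n b s) = s.
Proof. move=> hs; apply: amap_uniq => //. by rewrite subrr. Qed.

Lemma bmap_modinj s s' (z z' : int) : (s < N)%N -> (s' < N)%N ->
  N%:Z * z + bmap p n b s = N%:Z * z' + bmap p n b s' -> s = s'.
Proof.
move=> hs hs' e. apply: bmap_inj => //.
have -> : bmap p n b s - bmap p n b s' = N%:Z * (z' - z).
  move: e. set a := bmap p n b s. set a' := bmap p n b s'. move=> e.
  have -> : a = N%:Z * z' + a' - N%:Z * z by rewrite -e; ring.
  ring.
exact: dvdz_mulr.
Qed.
End Amap.

Lemma min_exists (P : nat -> Prop) : (exists k, P k) -> exists k, P k /\ forall k', P k' -> (k <= k')%N.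
Proof.
move=> [k hk]; elim/ltn_ind: k hk => k IH hk.
case: (classic (exists k', (k' < k)%N /\ P k')) => [[k' [lt hk']]|nex].
  exact: IH lt hk'.
exists k; split => // k' hk'. rewrite leqNgt; apply/negP => lt. by apply: nex; exists k'.
Qed.

Section FG.
Variables (K : fieldType) (vK : K -> int).
Hypothesis HvK : is_normalized_dval vK.
Variable (V : lmodType K).

Lemma vring_opp c : vring vK c -> vring vK (- c).
Proof.
case=> [->|h]; first by rewrite oppr0; left.
have [->|c0] := eqVneq c 0; first by rewrite oppr0; left.
by right; rewrite vN.
Qed.

Lemma fg (r : nat) (f : nat -> V -> K) (B : nat -> int) (S : V -> Prop) :
  S 0 -> (forall x y, S x -> S y -> S (x + y)) ->
  (forall c x, vring vK c -> S x -> S (c *: x)) ->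
  (forall i c x, f i (c *: x) = c * f i x) ->
  (forall i x y, f i (x + y) = f i x + f i y) ->
  (forall x, S x -> forall i, (i < r)%N -> f i x = 0 \/ - B i <= vK (f i x)) ->
  (forall x, S x -> (forall i, (i < r)%N -> f i x = 0) -> x = 0) ->
  exists gens : seq V, forall x, S x <-> exists c : nat -> K,
     (forall i, vring vK (c i)) /\ x = \sum_(i < size gens) c i *: gens`_i.
Proof.
move=> + + + fZ fD; elim: r S => [|r IH] S S0 SD SZ Sb Ssep.
  exists [::] => x; split.
    move=> Sx; exists (fun _ => 0); split; first by move=> _; left.
    by rewrite big_ord0; apply: Ssep.
  by case=> c [_ ->]; rewrite big_ord0.
have f0 : forall i, f i 0 = 0 by move=> i; rewrite -(scale0r 0) fZ mul0r.
pose S' x := S x /\ f r x = 0.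
have [gens' Hg'] : exists gens' : seq V, forall x, S' x <-> exists c : nat -> K,
     (forall i, vring vK (c i)) /\ x = \sum_(i < size gens') c i *: gens'`_i.
  apply: IH.
  - by split.
  - by move=> x y [Sx fx] [Sy fy]; split; [apply: SD | rewrite fD fx fy addr0].
  - by move=> c x hc [Sx fx]; split; [apply: SZ | rewrite fZ fx mulr0].
  - by move=> x [Sx _] i hi; apply: Sb => //; apply: ltnW.
  - move=> x [Sx fx] h; apply: Ssep => // i; rewrite ltnS leq_eqVlt => /orP [/eqP ->|]//.
    exact: h.
case: (classic (exists x, S x /\ f r x != 0)) => [ex|nex]; last first.
  exists gens' => x; rewrite -Hg'; split; last by case.
  move=> Sx; split => //. have [//|nz] := eqVneq (f r x) 0. by exfalso; apply: nex; exists x.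
pose mu x := absz (vK (f r x) + B r).
have [k [[x0 [Sx0 [fx0 ek]]] kmin]] := min_exists
   (P := fun k => exists x, S x /\ f r x != 0 /\ mu x = k)
   (let: ex_intro x (conj Sx fx) := ex in ex_intro _ (mu x) (ex_intro _ x (conj Sx (conj fx erefl)))).
have hmin : forall x, S x -> f r x != 0 -> vK (f r x0) <= vK (f r x).
  move=> x Sx fx. have := kmin (mu x) (ex_intro _ x (conj Sx (conj fx erefl))).
  rewrite -ek /mu.
  have := Sb x Sx r (ltnSn r). have := Sb x0 Sx0 r (ltnSn r).
  case=> [e|h0]; first by move: fx0; rewrite e eqxx.
  case=> [e|h1]; first by move: fx; rewrite e eqxx.
  move: h0 h1. set a := vK (f r x0). set c := vK (f r x). set d := B r. lia.
exists (x0 :: gens') => x; split.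
  move=> Sx. set d := f r x / f r x0.
  have hd : vring vK d.
    have [fx|fx] := eqVneq (f r x) 0; first by left; rewrite /d fx mul0r.
    right. rewrite /d (vM HvK) ?invr_eq0 // (vV HvK) //. have := hmin x Sx fx.
    set a := vK (f r x0). set c := vK (f r x). lia.
  have S'x : S' (x + (- d) *: x0).
    split; first by apply: SD => //; apply: SZ => //; apply: vring_opp.
    by rewrite fD fZ /d mulNr divfK // subrr.
  have [c' [hc' ex']] := (Hg' _).1 S'x.
  exists (fun i => if i is i'.+1 then c' i' else d); split.
    by case.
  rewrite /= big_ord_recl /=. rewrite -ex'. rewrite scaleNr addrA addrC addrA.
  by rewrite [_ + d *: x0]addrC subrr add0r.
case=> c [hc ->]. rewrite /= big_ord_recl /=.
apply: SD; first by apply: SZ.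
have : S' (\sum_(i < size gens') c (bump 0 i) *: gens'`_i).
  by apply/(Hg' _).2; exists (fun i => c i.+1); split.
by case.
Qed.
End FG.

Section Main.
Variables (p n : nat) (K : fieldType) (L : fieldExtType K) (A : falgType K)
    (vK : K -> int) (vL : L -> int) (act : A -> L -> L)
    (T : option nat) (b : nat -> int) (lam : int -> L) (Psi : nat -> A).
Hypothesis pp : prime p.
Hypothesis HvK : is_normalized_dval vK.
Hypothesis HvL : is_normalized_dval vL.
Hypothesis dimL : \dim {:L} = (p ^ n)%N.
Hypothesis vLK : forall c : K, c != 0 -> vL (c%:A) = (p ^ n)%:Z * vK c.
Hypothesis dimA : \dim {:A} = (p ^ n)%N.
Hypothesis Hact : is_Kaction act.
Hypothesis hT : match T with None => True | Some T => is_true (1 <= T)%N end.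
Hypothesis hb : forall i, (1 <= i <= n)%N -> ~~ (p%:Z %| b i)%Z.
Hypothesis hlam : forall t : int, lam t != 0 /\ vL (lam t) = t.
Hypothesis hlamK : forall t1 t2 : int, (t1 == t2 %[mod (p ^ n)%:Z])%Z ->
          exists c : K, lam t1 / lam t2 = c%:A.
Hypothesis hPsi : forall i, (1 <= i <= n)%N -> forall t : int,
          exists u : K, vunit vK u /\
            let m := t + (p ^ (n - i))%:Z * b i in
            if (1 <= digit p (amap p n b t) (n - i))%N
            then tcong vL T m (act (Psi i) (lam t)) (u *: lam m)
            else tcong vL T m (act (Psi i) (lam t)) 0.

Local Notation N := (p ^ n)%N.
Let p1 : (1 < p)%N := prime_gt1 pp.
Lemma Npos' : (0 < N)%N. Proof. by rewrite expn_gt0 prime_gt0. Qed.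

Lemma act1 x : act 1 x = x. Proof. by case: Hact. Qed.
Lemma actM a c x : act (a * c) x = act a (act c x). Proof. by case: Hact. Qed.
Lemma actDl a c x : act (a + c) x = act a x + act c x. Proof. by case: Hact. Qed.
Lemma actDr a x y : act a (x + y) = act a x + act a y. Proof. by case: Hact. Qed.
Lemma actZl c a x : act (c *: a) x = c *: act a x. Proof. by case: Hact => _ _ _ _ []. Qed.
Lemma actZr c a x : act a (c *: x) = c *: act a x. Proof. by case: Hact => _ _ _ _ []. Qed.
Lemma act0l x : act 0 x = 0.
Proof. by apply: (addrI (act 0 x)); rewrite -actDl !addr0. Qed.
Lemma act0r a : act a 0 = 0.
Proof. by apply: (addrI (act a 0)); rewrite -actDr !addr0. Qed.
Lemma actNl a x : act (- a) x = - act a x.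
Proof. by apply/eqP; rewrite -subr_eq0 opprK -actDl addNr act0l. Qed.
Lemma actBl a c x : act (a - c) x = act a x - act c x.
Proof. by rewrite actDl actNl. Qed.
Lemma actBr a x y : act a (x - y) = act a x - act a y.
Proof. by rewrite actDr -scaleN1r actZr scaleN1r. Qed.
Lemma act_sum m (c : 'I_m -> K) (a : 'I_m -> A) x :
  act (\sum_(i < m) c i *: a i) x = \sum_(i < m) c i *: act (a i) x.
Proof.
elim/big_rec2: _ => [|i y z _ <-]; first by rewrite act0l.
by rewrite actDl actZl.
Qed.

Lemma algA_neq0 (c : K) : c != 0 -> c%:A != 0 :> L.
Proof. by move=> c0; rewrite scaler_eq0 negb_or c0 oner_neq0. Qed.

Lemma vLZ (c : K) (x : L) : c != 0 -> x != 0 ->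
  c *: x != 0 /\ vL (c *: x) = N%:Z * vK c + vL x.
Proof.
move=> c0 x0; rewrite -mulr_algl; split; first by rewrite mulf_neq0 // algA_neq0.
by rewrite vM // ?algA_neq0 // vLK.
Qed.

Lemma videalZ h (c : K) (x : L) : c != 0 -> videal vL h x -> videal vL (h + N%:Z * vK c) (c *: x).
Proof.
move=> c0 [->|hx]; first by rewrite scaler0; left.
have [x0|x0] := eqVneq x 0; first by rewrite x0 scaler0; left.
right; have [_ ->] := vLZ c0 x0. move: hx. set a := vL x. set z := vK c. lia.
Qed.

Lemma videalZ0 h (c : K) (x : L) : vring vK c -> videal vL h x -> videal vL h (c *: x).
Proof.
move=> [->|hc] hx; first by rewrite scale0r; left.
have [c0|c0] := eqVneq c 0; first by rewrite c0 scale0r; left.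
apply: (videal_le _ (videalZ c0 hx)). have := Npos'. move: hc. set z := vK c. nia.
Qed.

Lemma videal_sum h m (F : 'I_m -> L) : (forall i, videal vL h (F i)) -> videal vL h (\sum_(i < m) F i).
Proof.
move=> hF; elim/big_rec: _ => [|i x _ hx]; first by left.
exact: videalD.
Qed.

Lemma modeq_small (a c i j : int) : 0 <= i < N%:Z -> 0 <= j < N%:Z ->
  N%:Z * a + i = N%:Z * c + j -> i = j /\ a = c.
Proof.
move=> hi hj e. have Np : 0 < N%:Z by have := Npos'; lia.
move: hi hj e. set M := N%:Z. move: Np. clearbody M. move=> Mp hi hj e.
have d : M * (a - c) = j - i by rewrite mulrBr; move: e; lia.
have [h|h|h] := ltgtP a c.
- have : M * 1 <= M * (c - a) by rewrite ler_pM2l //; lia.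
  move: d; rewrite mulr1 -opprB mulrN. lia.
- have : M * 1 <= M * (a - c) by rewrite ler_pM2l //; lia.
  move: d; rewrite mulr1. lia.
- move: d; rewrite h subrr mulr0. lia.
Qed.

Definition lamX := [tuple lam (i : nat)%:Z | i < N].

Lemma lamX_nth (i : 'I_N) : lamX`_i = lam (i : nat)%:Z.
Proof. by rewrite nth_mktuple. Qed.

Lemma lam_dist (c : 'I_N -> K) (i j : 'I_N) : i != j -> c i *: lam (i : nat)%:Z != 0 ->
  c j *: lam (j : nat)%:Z != 0 -> vL (c i *: lam (i : nat)%:Z) != vL (c j *: lam (j : nat)%:Z).
Proof.
move=> ij hi hj.
have ci : c i != 0 by apply: contraNneq hi => ->; rewrite scale0r.
have cj : c j != 0 by apply: contraNneq hj => ->; rewrite scale0r.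
have [_ ->] := vLZ ci (proj1 (hlam (i : nat)%:Z)). have [_ ->] := vLZ cj (proj1 (hlam (j : nat)%:Z)).
rewrite !(proj2 (hlam _)). apply/eqP => e.
have bi : 0 <= (i : nat)%:Z < N%:Z by have := ltn_ord i; lia.
have bj : 0 <= (j : nat)%:Z < N%:Z by have := ltn_ord j; lia.
have [e1 _] := modeq_small bi bj e.
move: ij; rewrite (_ : i = j) ?eqxx //. apply: val_inj. by case: e1.
Qed.

Lemma lamX_free : free lamX.
Proof.
apply/freeP => k hk i.
have [Ia _ _] := @sum_dist_ord _ _ HvL N (fun i => k i *: lam (i : nat)%:Z) (@lam_dist k).
have H : \sum_(i < N) k i *: lam (i : nat)%:Z = 0.
  by rewrite -[RHS]hk; apply: eq_bigr => j _; rewrite lamX_nth.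
have /eqP := Ia H i. by rewrite scaler_eq0 (negbTE (proj1 (hlam _))) orbF => /eqP.
Qed.

Lemma lamX_span : <<lamX>>%VS = fullv.
Proof.
have : basis_of fullv lamX.
  by rewrite basisEfree lamX_free subvf size_tuple dimL leqnn.
by case/andP => /eqP.
Qed.

Lemma lam_expand x : x = \sum_(i < N) coord lamX i x *: lam (i : nat)%:Z.
Proof.
rewrite {1}(@coord_span _ _ _ lamX x); last by rewrite lamX_span memvf.
by apply: eq_bigr => i _; rewrite lamX_nth.
Qed.

Lemma decomp x : x != 0 -> exists u : K,
  [/\ u != 0, vK u = 0 & videal vL (vL x + 1) (x - u *: lam (vL x))].
Proof.
move=> x0.
set c := coord lamX ^~ x.
have ex := lam_expand x. rewrite -/c in ex.
have [_ Ib Ic] := @sum_dist_ord _ _ HvL N (fun i => c i *: lam (i : nat)%:Z) (@lam_dist c).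
rewrite -ex in Ib Ic.
have [i0 [G0 vG0]] := Ib x0.
have ci0 : c i0 != 0 by apply: contraNneq G0 => ->; rewrite scale0r.
set t := vL x.
have [_ vGi0] := vLZ ci0 (proj1 (hlam ((i0 : nat)%:Z))).
rewrite (proj2 (hlam _)) vG0 in vGi0.
have [k hk] : exists k : K, lam (i0 : nat)%:Z / lam t = k%:A.
  apply: hlamK. rewrite eqz_mod_dvd.
  have -> : (i0 : nat)%:Z - t = N%:Z * (- vK (c i0)) by rewrite /t vGi0; ring.
  exact: dvdz_mulr.
have el : lam (i0 : nat)%:Z = k *: lam t.
  by rewrite -mulr_algl -hk mulfVK // (proj1 (hlam _)).
exists (c i0 * k).
have u0 : c i0 * k != 0.
  apply: contraNneq G0; rewrite el scalerA => ->. by rewrite scale0r.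
have hrest : videal vL (t + 1) (x - (c i0 * k) *: lam t).
  rewrite {1}ex (bigD1 i0) //= el scalerA addrAC subrr add0r.
  elim/big_rec: _ => [|i y ii0 hy]; first by left.
  apply: (videalD HvL) hy => /=.
  have [->|Gi] := eqVneq (c i *: lam (i : nat)%:Z) 0; first by left.
  right. have h1 := Ic x0 i Gi. have h2 := lam_dist ii0 Gi G0.
  rewrite vG0 -/t in h2. move: h1 h2. rewrite -/t. set a := vL (c i *: lam (i : nat)%:Z).
  move=> h1 /eqP h2. lia.
split=> //.
have [_ e2] := vLZ u0 (proj1 (hlam t)). rewrite (proj2 (hlam _)) in e2.
have e3 : vL ((c i0 * k) *: lam t) = t by rewrite -scalerA -el vG0.
have := Npos'. move: e2. rewrite e3. set z := vK (c i0 * k). nia.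
Qed.

Local Notation sh i := ((p ^ (n - i))%:Z * b i).

Lemma act_sumr m (c : 'I_m -> K) (y : 'I_m -> L) a :
  act a (\sum_(i < m) c i *: y i) = \sum_(i < m) c i *: act a (y i).
Proof.
elim/big_rec2: _ => [|i z w _ <-]; first by rewrite act0r.
by rewrite actDr actZr.
Qed.

Lemma SC i t : (1 <= i <= n)%N -> videal vL (t + sh i) (act (Psi i) (lam t)).
Proof.
move=> hi. have [u [[u0 vu0] H]] := hPsi hi t.
move: H => /=. set m := t + sh i.
have hl := hlam m.
case: ifP => _; case: T hT => [T' hT'|_] /= H.
- rewrite -(subrK (u *: lam m) (act (Psi i) (lam t))).
  apply: (videalD HvL).
    apply: (videal_le _ H). lia.
  right. have [_ ->] := vLZ u0 (proj1 hl). rewrite (proj2 hl) vu0 mulr0 add0r. done.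
- rewrite H. right. have [_ ->] := vLZ u0 (proj1 hl). by rewrite (proj2 hl) vu0 mulr0 add0r.
- rewrite subr0 in H. apply: (videal_le _ H). lia.
- by rewrite H; left.
Qed.

Lemma SC' i t : (1 <= i <= n)%N -> (1 <= digit p (amap p n b t) (n - i))%N ->
  exists u : K, [/\ u != 0, vK u = 0 &
     videal vL (t + sh i + 1) (act (Psi i) (lam t) - u *: lam (t + sh i))].
Proof.
move=> hi hd. have [u [[u0 vu0] H]] := hPsi hi t.
move: H => /=. rewrite hd. exists u; split => //.
case: T hT H => [T' hT'|_] /= H.
- apply: (videal_le _ H). lia.
- by rewrite H subrr; left.
Qed.

Lemma W1 i h x : (1 <= i <= n)%N -> videal vL h x -> videal vL (h + sh i) (act (Psi i) x).
Proof.
move=> hi hx.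
have [->|x0] := eqVneq x 0; first by rewrite act0r; left.
set c := coord lamX ^~ x.
have ex := lam_expand x. rewrite -/c in ex.
rewrite [X in act _ X]ex act_sumr.
have [_ _ Ic] := @sum_dist_ord _ _ HvL N (fun i => c i *: lam (i : nat)%:Z) (@lam_dist c).
rewrite -ex in Ic.
apply: videal_sum => j.
change (videal vL (h + sh i) (c j *: act (Psi i) (lam (j : nat)%:Z))).
have [c0|c0] := eqVneq (c j) 0; first by rewrite c0 scale0r; left.
have hl := hlam (j : nat)%:Z.
have [G0 vG] := vLZ c0 (proj1 hl).
have h1 := Ic x0 j G0. rewrite vG (proj2 hl) in h1.
apply: (videal_le _ (videalZ c0 (SC _ hi))).
case: hx => [e|hx]; first by move: x0; rewrite e eqxx.
move: h1 hx. set a := vK (c j). set z := vL x. set w := (p ^ (n - i))%:Z * b i.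
set M := N%:Z * a. lia.
Qed.

Lemma S1 i x : x != 0 -> (1 <= i <= n)%N -> (1 <= digit p (amap p n b (vL x)) (n - i))%N ->
  act (Psi i) x != 0 /\ vL (act (Psi i) x) = vL x + sh i.
Proof.
move=> x0 hi hd.
have [u [u0 vu0 hy]] := decomp x0.
set t := vL x in hd hy *. set y := x - u *: lam t in hy.
have ex : x = u *: lam t + y by rewrite /y addrC subrK.
have [u' [u'0 vu'0 he]] := SC' hi hd.
set m := t + sh i in he *. set e := act (Psi i) (lam t) - u' *: lam m in he.
have eact : act (Psi i) x = (u * u') *: lam m + (u *: e + act (Psi i) y).
  rewrite {1}ex actDr actZr /e scalerBr scalerA. ring.
have uu0 : u * u' != 0 by rewrite mulf_neq0.
have vuu : vK (u * u') = 0 by rewrite (vM HvK) // vu0 vu'0.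
have hl := hlam m.
have [M0 vM0] := vLZ uu0 (proj1 hl). rewrite vuu mulr0 add0r (proj2 hl) in vM0.
have hrest : videal vL (vL ((u * u') *: lam m) + 1) (u *: e + act (Psi i) y).
  rewrite vM0. apply: (videalD HvL).
    have := videalZ u0 he. rewrite vu0 mulr0 addr0. done.
  have := W1 hi hy. by rewrite /m addrAC.
have [nz ev] := strict HvL M0 hrest.
by rewrite eact; split => //; rewrite ev vM0.
Qed.

Lemma WPow i r h x : (1 <= i <= n)%N -> videal vL h x ->
  videal vL (h + r%:Z * sh i) (act (Psi i ^+ r) x).
Proof.
move=> hi hx; elim: r => [|r IH]; first by rewrite expr0 act1 mul0r addr0.
rewrite exprS actM. have := W1 hi IH.
have e : (r.+1)%:Z * sh i = r%:Z * sh i + sh i by rewrite -addn1 PoszD mulrDl mul1r.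
by rewrite e addrA.
Qed.

Definition Pprod s a := \prod_(a <= j < n) Psi (n - j)%N ^+ digit p s j.
Definition Bsum s a := \sum_(a <= j < n) (digit p s j)%:Z * (p ^ j)%:Z * b (n - j)%N.

Lemma Pprod_step s a : (a < n)%N ->
  Pprod s a = Psi (n - a)%N ^+ digit p s a * Pprod s a.+1.
Proof. by move=> ha; rewrite /Pprod big_ltn. Qed.

Lemma Bsum_step s a : (a < n)%N ->
  Bsum s a = (digit p s a)%:Z * sh (n - a)%N + Bsum s a.+1.
Proof.
move=> ha; rewrite /Bsum big_ltn // subKn; [by rewrite mulrA | exact: ltnW].
Qed.

Lemma WP s h x : videal vL h x -> videal vL (h + bmap p n b s) (act (Psi_pow p n Psi s) x).
Proof.
move=> hx.
suff H : forall m, (m <= n)%N -> videal vL (h + Bsum s (n - m)) (act (Pprod s (n - m)) x).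
  have := H n (leqnn n). rewrite subnn /Pprod /Bsum /Psi_pow bmapE /bmap' !big_mkord. done.
elim=> [|m IH] hm.
  by rewrite subn0 /Pprod /Bsum !big_geq // act1 addr0.
have ha : (n - m.+1 < n)%N by lia.
have ea : (n - m.+1).+1 = (n - m)%N by lia.
rewrite Pprod_step // Bsum_step // ea actM.
have hi : (1 <= n - (n - m.+1) <= n)%N by lia.
have := WPow (digit p s (n - m.+1)) hi (IH (ltnW hm)).
by rewrite -addrA [X in h + X]addrC.
Qed.

Lemma SPow i (r : nat) (x : L) : x != 0 -> (1 <= i <= n)%N ->
  (r <= digit p (amap p n b (vL x)) (n - i))%N ->
  [/\ act (Psi i ^+ r) x != 0, vL (act (Psi i ^+ r) x) = vL x + r%:Z * sh i &
      forall j, (j < n)%N -> digit p (amap p n b (vL (act (Psi i ^+ r) x))) j =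
         (digit p (amap p n b (vL x)) j - (if j == (n - i)%N then r else 0))%N].
Proof.
move=> x0 hi; elim: r => [|r IH] hr.
  rewrite expr0 act1 mul0r addr0; split => // j _. by case: ifP; rewrite subn0.
have [y0 vy hdy] := IH (ltnW hr).
set y := act (Psi i ^+ r) x in y0 vy hdy *.
have hdk : (1 <= digit p (amap p n b (vL y)) (n - i))%N.
  rewrite hdy ?eqxx; last by lia. move: hr. lia.
have [z0 vz] := S1 y0 hi hdk.
rewrite exprS actM -/y. split => //.
  have e : (r.+1)%:Z * sh i = r%:Z * sh i + sh i by rewrite -addn1 PoszD mulrDl mul1r.
  by rewrite vz vy e addrA.
move=> j hj.
have hk : (n - i < n)%N by lia.
have := amap_step pp hb (t := vL y) hk hdk hj.
rewrite subKn ?(proj2 (andP hi)) // -vz => ->.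
rewrite hdy //. case: eqP => _; lia.
Qed.

Lemma key s rho : (s < N)%N -> rho != 0 -> amap p n b (vL rho) = N.-1 ->
  act (Psi_pow p n Psi s) rho != 0 /\ vL (act (Psi_pow p n Psi s) rho) = vL rho + bmap p n b s.
Proof.
move=> hs rho0 ha.
suff H : forall m, (m <= n)%N ->
  [/\ act (Pprod s (n - m)) rho != 0,
      vL (act (Pprod s (n - m)) rho) = vL rho + Bsum s (n - m) &
      forall j, (j < n)%N -> digit p (amap p n b (vL (act (Pprod s (n - m)) rho))) j =
         if (n - m <= j)%N then (p.-1 - digit p s j)%N else p.-1].
  have [h1 h2 _] := H n (leqnn n). move: h1 h2.
  rewrite subnn /Pprod /Bsum /Psi_pow bmapE /bmap' !big_mkord. done.
elim=> [|m IH] hm.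
  rewrite subn0 /Pprod /Bsum !big_geq // act1 addr0; split => // j hj.
  rewrite ha leqNgt hj /=. exact: digit_pred.
have ha' : (n - m.+1 < n)%N by lia.
have ea : (n - m.+1).+1 = (n - m)%N by lia.
have [x0 vx hdx] := IH (ltnW hm).
set x := act (Pprod s (n - m)) rho in x0 vx hdx.
have hi : (1 <= n - (n - m.+1) <= n)%N by lia.
have ek : (n - (n - (n - m.+1)) = n - m.+1)%N by lia.
have hr : (digit p s (n - m.+1) <= digit p (amap p n b (vL x)) (n - (n - (n - m.+1))))%N.
  rewrite ek hdx // ifN; last by lia.
  have := digit_lt p1 s (n - m.+1). lia.
have [y0 vy hdy] := SPow x0 hi hr.
rewrite Pprod_step // Bsum_step // ea actM -/x. split => //.
  by rewrite vy vx -addrA [X in _ + X]addrC.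
move=> j hj. rewrite hdy // ek hdx //.
case: eqP => [->|nj]; first by rewrite ifN ?leqnn; lia.
have := digit_lt p1 s j. case: ifP; case: ifP; lia.
Qed.

Lemma img_dist rho m (k : 'I_m -> K) : (m <= N)%N -> rho != 0 -> amap p n b (vL rho) = N.-1 ->
  forall i j : 'I_m, i != j -> k i *: act (Psi_pow p n Psi i) rho != 0 ->
  k j *: act (Psi_pow p n Psi j) rho != 0 ->
  vL (k i *: act (Psi_pow p n Psi i) rho) != vL (k j *: act (Psi_pow p n Psi j) rho).
Proof.
move=> hm rho0 ha i j ij hi hj.
have hiN : (i < N)%N by apply: leq_trans (ltn_ord i) hm.
have hjN : (j < N)%N by apply: leq_trans (ltn_ord j) hm.
have ki : k i != 0 by apply: contraNneq hi => ->; rewrite scale0r.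
have kj : k j != 0 by apply: contraNneq hj => ->; rewrite scale0r.
have [Wi vWi] := key hiN rho0 ha. have [Wj vWj] := key hjN rho0 ha.
have [_ ->] := vLZ ki Wi. have [_ ->] := vLZ kj Wj.
rewrite vWi vWj. apply/eqP => e.
have e' : N%:Z * vK (k i) + bmap p n b i = N%:Z * vK (k j) + bmap p n b j.
  move: e. set u := N%:Z * vK (k i). set w := N%:Z * vK (k j). set r := vL rho.
  set bi := bmap p n b i. set bj := bmap p n b j. lia.
have := bmap_modinj pp hb hiN hjN e'. move=> /val_inj eij. by move: ij; rewrite eij eqxx.
Qed.

Lemma img_zero rho m (k : 'I_m -> K) : (m <= N)%N -> rho != 0 -> amap p n b (vL rho) = N.-1 ->
  \sum_(i < m) k i *: act (Psi_pow p n Psi i) rho = 0 -> forall i, k i = 0.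
Proof.
move=> hm rho0 ha H i.
have [Ia _ _] := @sum_dist_ord _ _ HvL m _ (@img_dist rho m k hm rho0 ha).
have hiN : (i < N)%N by apply: leq_trans (ltn_ord i) hm.
have [Wi _] := key hiN rho0 ha.
have /eqP := Ia H i. by rewrite scaler_eq0 (negbTE Wi) orbF => /eqP.
Qed.

Lemma img_low rho m (k : 'I_m -> K) h : (m <= N)%N -> rho != 0 -> amap p n b (vL rho) = N.-1 ->
  videal vL h (\sum_(i < m) k i *: act (Psi_pow p n Psi i) rho) ->
  forall i, k i = 0 \/ h <= N%:Z * vK (k i) + vL rho + bmap p n b i.
Proof.
move=> hm rho0 ha H i.
have [Ia _ Ic] := @sum_dist_ord _ _ HvL m _ (@img_dist rho m k hm rho0 ha).
have hiN : (i < N)%N by apply: leq_trans (ltn_ord i) hm.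
have [Wi vWi] := key hiN rho0 ha.
have [ki|ki] := eqVneq (k i) 0; first by left.
right. have [Gi vGi] := vLZ ki Wi.
case: H => [H|H]; first by move: Gi; rewrite (Ia H i) eqxx.
have [S0|S0] := eqVneq (\sum_(i < m) k i *: act (Psi_pow p n Psi i) rho) 0.
  by move: Gi; rewrite (Ia S0 i) eqxx.
have := Ic S0 i Gi. rewrite vGi vWi. move: H.
set a := vL (\sum_(i0 < m) k i0 *: act (Psi_pow p n Psi i0) rho).
set u := N%:Z * vK (k i). lia.
Qed.

Definition Xs := [seq Psi_pow p n Psi s | s <- iota 0 N].
Lemma size_Xs : size Xs = N. Proof. by rewrite size_map size_iota. Qed.
Lemma Xs_nth i : (i < N)%N -> Xs`_i = Psi_pow p n Psi i.
Proof. by move=> hi; rewrite (nth_map 0%N) ?size_iota // nth_iota. Qed.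

Lemma b0_spec : amap p n b (- bmap p n b N.-1) = N.-1.
Proof. apply: amap_bmap => //. by rewrite prednK ?Npos'. Qed.

Lemma Xs_basis : basis_of fullv Xs.
Proof.
rewrite basisEfree subvf size_Xs dimA leqnn !andbT /=.
set rho := lam (- bmap p n b N.-1).
have [rho0 vrho] := hlam (- bmap p n b N.-1).
have ha : amap p n b (vL rho) = N.-1 by rewrite vrho b0_spec.
change (free (in_tuple Xs)); apply/freeP => k hk.
apply: (@img_zero rho (size Xs) k _ rho0 ha); first by rewrite size_Xs.
have := congr1 (act^~ rho) hk. rewrite /= act0l act_sum => e. rewrite -[RHS]e.
apply: eq_bigr => i _. by rewrite Xs_nth // -size_Xs.
Qed.

Lemma Xs_span : <<Xs>>%VS = fullv.
Proof. by have /andP [/eqP -> _] := Xs_basis. Qed.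

Lemma Xs_expand (a : A) : a = \sum_(i < size Xs) coord (in_tuple Xs) i a *: Xs`_i.
Proof. by apply: (@coord_span _ _ _ (in_tuple Xs)); rewrite Xs_span memvf. Qed.

Lemma part2 b' rho : amap p n b b' = N.-1 -> rho != 0 -> vL rho = b' ->
  bijective (fun alpha : A => act alpha rho).
Proof.
move=> ha rho0 vrho. rewrite -vrho in ha.
have inj : forall a c, act a rho = act c rho -> a = c.
  move=> a c e. apply/eqP; rewrite -subr_eq0; apply/eqP.
  have e0 : act (a - c) rho = 0 by rewrite actBl e subrr.
  rewrite (Xs_expand (a - c)) big1 // => i _.
  rewrite (@img_zero rho (size Xs) (fun i => coord (in_tuple Xs) i (a - c)) _ rho0 ha) ?scale0r //.
    by rewrite size_Xs.
  rewrite -[RHS]e0 [X in act X rho](Xs_expand (a - c)) act_sum. apply: eq_bigr => j _.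
  by rewrite Xs_nth // -size_Xs.
set Ws := [seq act a rho | a <- Xs].
have sW : size Ws = N by rewrite size_map size_Xs.
have Ws_nth : forall i, (i < N)%N -> Ws`_i = act (Psi_pow p n Psi i) rho.
  by move=> i hi; rewrite (nth_map 0) ?size_Xs // Xs_nth.
have Wbasis : basis_of fullv Ws.
  rewrite basisEfree subvf sW dimL leqnn !andbT /=.
  change (free (in_tuple Ws)); apply/freeP => k hk.
  apply: (@img_zero rho (size Ws) k _ rho0 ha); first by rewrite sW.
  rewrite -[RHS]hk. apply: eq_bigr => i _. by rewrite /= Ws_nth // -sW.
have Wspan : <<Ws>>%VS = fullv by have /andP [/eqP -> _] := Wbasis.
pose g y := \sum_(i < size Ws) coord (in_tuple Ws) i y *: Xs`_i.
have fg : forall y, act (g y) rho = y.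
  move=> y. rewrite /g act_sum [RHS](@coord_span _ _ _ (in_tuple Ws) y) ?Wspan ?memvf //.
  apply: eq_bigr => i _ /=. have hi : (i < N)%N by rewrite -sW. by rewrite Ws_nth // Xs_nth.
exists g => // a. apply: inj. by rewrite fg.
Qed.

Lemma vKX (x : K) M : x != 0 -> vK (x ^+ M) = M%:Z * vK x.
Proof.
move=> x0; elim: M => [|M IH]; first by rewrite expr0 (v1 HvK) mul0r.
rewrite exprS (vM HvK) ?expf_neq0 // IH.
rewrite -addn1 PoszD mulrDl mul1r addrC. done.
Qed.

Lemma part3 h : is_OK_order vK (assoc_order vL act h).
Proof.
set S := assoc_order vL act h.
have S1 : S 1 by move=> x hx; rewrite act1.
have S0 : S 0 by move=> x hx; rewrite act0l; left.
have SD : forall x y, S x -> S y -> S (x + y).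
  by move=> a c Sa Sc x hx; rewrite actDl; apply: (videalD HvL); [apply: Sa | apply: Sc].
have SM : forall x y, S x -> S y -> S (x * y).
  by move=> a c Sa Sc x hx; rewrite actM; apply: Sa; apply: Sc.
have SZ : forall (c : K) x, vring vK c -> S x -> S (c *: x).
  by move=> c a hc Sa x hx; rewrite actZl; apply: videalZ0 => //; apply: Sa.
pose fc (i : nat) (a : A) : K :=
  if (insub i : option 'I_(size Xs)) is Some j then coord (in_tuple Xs) j a else 0.
have fc_val : forall (j : 'I_(size Xs)) a, fc j a = coord (in_tuple Xs) j a.
  by move=> j a; rewrite /fc valK.
have fZ : forall i c x, fc i (c *: x) = c * fc i x.
  by move=> i c x; rewrite /fc; case: insub => [j|]; [rewrite linearZ | rewrite mulr0].
have fD : forall i x y, fc i (x + y) = fc i x + fc i y.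
  by move=> i x y; rewrite /fc; case: insub => [j|]; [rewrite linearD | rewrite addr0].
have Ssep : forall x, S x -> (forall i, (i < N)%N -> fc i x = 0) -> x = 0.
  move=> a _ H. rewrite (Xs_expand a) big1 // => j _.
  by rewrite -fc_val H ?scale0r // -size_Xs.
set bb := - bmap p n b N.-1 + N%:Z * ((absz h)%:Z + (absz (bmap p n b N.-1))%:Z).
pose Bf (i : nat) : int := (absz h)%:Z + (absz bb)%:Z + (absz (bmap p n b i))%:Z.
have hNz : 1 <= N%:Z by have := Npos'; lia.
have Sb : forall x, S x -> forall i, (i < N)%N -> fc i x = 0 \/ - Bf i <= vK (fc i x).
  move=> a Sa i hi.
  have [rho0 vrho] := hlam bb.
  have ha : amap p n b (vL (lam bb)) = N.-1 by rewrite vrho /bb amap_shift // b0_spec.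
  have hrho : videal vL h (lam bb).
    right; rewrite vrho /bb. move: hNz. set q := N%:Z. set z := bmap p n b N.-1. nia.
  have H := Sa _ hrho.
  rewrite [X in act X _](Xs_expand a) act_sum in H.
  have H' : videal vL h (\sum_(j < size Xs) coord (in_tuple Xs) j a *: act (Psi_pow p n Psi j) (lam bb)).
    move: H. congr (videal _ _ _). apply: eq_bigr => j _. by rewrite Xs_nth // -size_Xs.
  have hi' : (i < size Xs)%N by rewrite size_Xs.
  have := @img_low (lam bb) (size Xs) (fun j => coord (in_tuple Xs) j a) h (eq_leq size_Xs) rho0 ha H' (Ordinal hi').
  rewrite -(fc_val (Ordinal hi')) /= vrho.
  case=> [->|hb']; first by left.
  right. move: hb'. rewrite /Bf. set c := vK (fc i a). set z := bmap p n b i.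
  clearbody bb. move: hNz. set q := N%:Z. move=> hq hb'.
  have [c0|c0] := leP 0 c; first by lia.
  have : q * c <= c by rewrite -[X in _ <= X]mul1r ler_wnM2r //; lia.
  lia.
have [gens Hg] := @fg _ _ HvK A N fc Bf S S0 SD SZ fZ fD Sb Ssep.
split => //; split => //; exists gens; split => //.
have memg : forall x, S x -> x \in <<gens>>%VS.
  move=> x /(Hg x) [c [_ ->]]. apply: memv_suml => i _. apply: memvZ.
  by apply: memv_span; apply: mem_nth.
apply/eqP; rewrite eqEsubv subvf /= -Xs_span. apply/span_subvP => a /mapP [s hs ->].
have hsN : (s < N)%N by move: hs; rewrite mem_iota.
have [_ _ hz] := HvK. have [pi pi0 vpi] := hz 1.
set M := absz (bmap p n b s).
have piM : pi ^+ M != 0 by apply: expf_neq0.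
have Spi : S (pi ^+ M *: Psi_pow p n Psi s).
  move=> x hx. rewrite actZl. have := videalZ piM (WP s hx).
  rewrite vKX // vpi mulr1. apply: videal_le.
  rewrite /M. move: hNz. set q := N%:Z. set z := bmap p n b s. nia.
rewrite -[Psi_pow p n Psi s](scalerK piM). apply: memvZ. exact: memg.
Qed.

Lemma main_conj :
    [/\ basis_of fullv [seq Psi_pow p n Psi s | s <- iota 0 (p ^ n)],
        (forall (b' : int) (rho : L),
            amap p n b b' = (p ^ n).-1 -> rho != 0 -> vL rho = b' ->
            bijective (fun alpha : A => act alpha rho)) &
        (forall h : int, is_OK_order vK (assoc_order vL act h))].
Proof.
split; [exact: Xs_basis | exact: part2 | exact: part3].
Qed.
End Main.

Theorem proposition2p9
    (p n : nat) (K : fieldType) (L : fieldExtType K) (A : falgType K)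
    (vK : K -> int) (vL : L -> int) (act : A -> L -> L)
    (T : option nat) (b : nat -> int) (lam : int -> L) (Psi : nat -> A) :
    prime p ->
    (* K complete w.r.t. the normalized discrete valuation vK *)
    is_normalized_dval vK -> v_complete vK ->
    (* residue field of characteristic p : p lies in the maximal ideal of O_K *)
    videal vK 1 (p%:R : K) ->
    (* L/K of degree p^n, vL normalized valuation extending vK with e = p^n
       (totally ramified) *)
    \dim {:L} = (p ^ n)%N ->
    is_normalized_dval vL ->
    (forall c : K, c != 0 -> vL (c%:A) = (p ^ n)%:Z * vK c) ->
    (* A : K-algebra of dimension p^n acting K-linearly on L *)
    \dim {:A} = (p ^ n)%N ->
    is_Kaction act ->
    (* an A-scaffold of tolerance T with shift parameters b_1..b_n *)
    is_scaffold vK vL act p n T b lam Psi ->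
    [/\ basis_of fullv [seq Psi_pow p n Psi s | s <- iota 0 (p ^ n)],
        (forall (b' : int) (rho : L),
            amap p n b b' = (p ^ n).-1 -> rho != 0 -> vL rho = b' ->
            bijective (fun alpha : A => act alpha rho)) &
        (forall h : int, is_OK_order vK (assoc_order vL act h))].

Proof.
move=> pp HvK _ _ dimL HvL vLK dimA Hact [hT hb hlam hlamK [_ hPsi]].
exact: (main_conj pp HvK HvL dimL vLK dimA Hact hT hb hlam hlamK hPsi).
Qed.
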